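(* Let $n\ge 6$. All vertices $[\tau]$ of $\widetilde P_0(S_n)$ with $\tau$ a transposition lie in the same connected component $\widetilde\Delta_n$ of $\widetilde P_0(S_n)$, and $\widetilde\Delta_n$ contains vertices of each of the types $[1^{n-2},2]$, $[1^{n-5},2,3]$ and $[1^{n-3},3]$.
   Context: $\widetilde P_0(S_n)$: vertex set $\{[x]:x\in S_n\setminus\{\mathrm{id}\}\}$ with $[x]=\{y:\langle y\rangle=\langle x\rangle\}$, distinct $[x],[y]$ adjacent iff some representatives are one a positive power of the other. The type of $[\psi]$ is the partition of $n$ given by the orbit lengths of $\langle\psi\rangle$ on $\{1,\dots,n\}$, written with exponents denoting multiplicities. *)

(* Defs.v *)
From mathcomp Require Import all_boot all_order all_fingroup.
From Stdlib Require Import Relations.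
Set Implicit Arguments. Unset Strict Implicit. Unset Printing Implicit Defensive.
Local Open Scope group_scope.

Definition cls (n : nat) (x : 'S_n) : {set 'S_n} := [set y | <[y]> == <[x]>].

Definition vertex (n : nat) (V : {set 'S_n}) : Prop :=
  exists2 x : 'S_n, x != 1 & V = cls x.

Definition adj (n : nat) (V W : {set 'S_n}) : Prop :=
  [/\ vertex V, vertex W, V <> W &
      exists x y : 'S_n, [/\ x \in V, y \in W &
        exists k : nat, (0 < k)%N /\ (x = y ^+ k \/ y = x ^+ k)]].

Definition connected (n : nat) (V W : {set 'S_n}) : Prop :=
  clos_refl_trans _ (@adj n) V W.

Definition cycle_type (n : nat) (psi : 'S_n) : seq nat :=
  map (fun X : {set 'I_n} => #|X|) (enum (porbits psi)).

Definition has_type (n : nat) (psi : 'S_n) (t : seq nat) : bool :=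
  perm_eq (cycle_type psi) t.

Definition transposition (n : nat) (t : 'S_n) : Prop :=
  exists i j : 'I_n, i != j /\ t = tperm i j.

(* Main.v *)
Require Import Defs.
From mathcomp Require Import all_boot all_order all_fingroup.
From Stdlib Require Import Relations.
From mathcomp Require Import zify.
Set Implicit Arguments. Unset Strict Implicit. Unset Printing Implicit Defensive.

Section S.
Local Open Scope group_scope.
Variable n : nat.

Lemma fixX (s : 'S_n) z k : s z = z -> (s ^+ k) z = z.
Proof. by move=> h; elim: k => [|k IH]; rewrite ?expg0 ?perm1 // expgSr permM IH h. Qed.

Lemma tpermE (x y z : 'I_n) : tperm x y z = if z == x then y else if z == y then x else z.
Proof.
case: tpermP => [->|->|/eqP/negbTE-> /eqP/negbTE->]; rewrite ?eqxx //.
by case: eqP => // ->.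
Qed.

Ltac fin0 := first [ done
  | match goal with H : is_true (?x != ?x) |- _ => by move: (H); rewrite eqxx end
  | match goal with H : ~ ?x = ?x |- _ => by case: H end ].
Ltac fin := first [ fin0 | (let h := fresh in intro h; subst; fin0) ].
Lemma neqSF (T : eqType) (x y : T) : x != y -> (y == x) = false.
Proof. by rewrite eq_sym => /negbTE. Qed.
Ltac simpk := repeat match goal with
  | H : is_true (?x != ?y) |- context [?x == ?y] => rewrite (negbTE H)
  | H : is_true (?x != ?y) |- context [?y == ?x] => rewrite (neqSF H)
  | H : ~ ?x = ?y |- context [?x == ?y] => rewrite (introF eqP H)
  | H : ~ ?y = ?x |- context [?x == ?y] => rewrite eq_sym (introF eqP H) end; rewrite ?eqxx /=.
Ltac casev := repeat (simpk; match goal with |- context [?x == ?y] => is_var x; is_var y; case: (x =P y) => ?; subst end); simpk.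
Ltac evalp := rewrite ?permM ?perm1 ?tpermE; casev; try fin.
Ltac solve_pt := apply/permP; let z := fresh "z" in intro z; rewrite ?permM ?perm1 !tpermE;
  casev; fin.

Lemma mem_cls (x : 'S_n) : x \in cls x. Proof. by rewrite inE. Qed.
Lemma cls_cyc (x y : 'S_n) : cls x = cls y -> <[x]> = <[y]>.
Proof. by move=> h; have := mem_cls x; rewrite h inE => /eqP. Qed.
Lemma adj_sym (V W : {set 'S_n}) : adj V W -> adj W V.
Proof.
case=> vV vW ne [x [y [hx hy [k [k0 h]]]]]; split=> //; first by move/esym.
exists y, x; split=> //; exists k; split=> //; case: h; auto.
Qed.
Lemma adj_pow (x y : 'S_n) k : x != 1 -> y != 1 -> cls x <> cls y -> (0 < k)%N ->
  x = y ^+ k -> adj (cls x) (cls y).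
Proof.
move=> x1 y1 ne k0 h; split=> //; try by [exists x | exists y].
by exists x, y; split; rewrite ?mem_cls //; exists k; split=> //; left.
Qed.

Section Link.
Variables a b d e f : 'I_n.
Hypotheses (ab : a != b) (ad : a != d) (ae : a != e) (af : a != f)
  (bd : b != d) (be : b != e) (bf : b != f) (de : d != e) (df : d != f) (ef : e != f).
Local Notation T1 := (tperm a b).
Local Notation C3 := (tperm d e * tperm e f).
Local Notation X6 := (T1 * C3).

Lemma tc_comm : commute T1 C3.
Proof. solve_pt. Qed.
Lemma t3 : T1 ^+ 3 = T1. Proof. rewrite !expgS expg0 mulg1; solve_pt. Qed.
Lemma t4 : T1 ^+ 4 = 1. Proof. rewrite !expgS expg0 mulg1; solve_pt. Qed.
Lemma c3 : C3 ^+ 3 = 1. Proof. rewrite !expgS expg0 mulg1; solve_pt. Qed.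
Lemma c4 : C3 ^+ 4 = C3. Proof. by rewrite expgSr c3 mul1g. Qed.
Lemma x3 : X6 ^+ 3 = T1.
Proof. rewrite expgMn; last exact: tc_comm. transitivity (T1 * 1); last exact: mulg1. congr (_ * _); [exact: t3 | exact: c3]. Qed.
Lemma x4 : X6 ^+ 4 = C3.
Proof. rewrite expgMn; last exact: tc_comm. transitivity (1 * C3); last exact: mul1g. congr (_ * _); [exact: t4 | exact: c4]. Qed.
Lemma t_neq1 : T1 != 1. Proof. apply/eqP => /permP/(_ a); evalp. Qed.
Lemma c_neq1 : C3 != 1. Proof. apply/eqP => /permP/(_ d); evalp. Qed.
Lemma x_neq1 : X6 != 1. Proof. apply/eqP => /permP/(_ d); evalp. Qed.
Lemma tfix : T1 d = d. Proof. evalp. Qed.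
Lemma cfix : C3 a = a. Proof. evalp. Qed.
Lemma cd : C3 d = f. Proof. evalp. Qed.
Lemma ta : T1 a = b. Proof. evalp. Qed.
Lemma adj_tx : adj (cls T1) (cls X6).
Proof.
apply: (adj_pow (k := 3)); [exact: t_neq1 | exact: x_neq1 | | by [] | by rewrite x3].
move=> /cls_cyc h; have : C3 \in <[T1]> by rewrite h; apply/cycleP; exists 4; rewrite x4.
case/cycleP => k hk; have := cd; rewrite hk fixX ?tfix // => /eqP; by rewrite (negbTE df).
Qed.
Lemma adj_cx : adj (cls C3) (cls X6).
Proof.
apply: (adj_pow (k := 4)); [exact: c_neq1 | exact: x_neq1 | | by [] | by rewrite x4].
move=> /cls_cyc h; have : T1 \in <[C3]> by rewrite h; apply/cycleP; exists 3; rewrite x3.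
case/cycleP => k hk; have := ta; rewrite hk fixX ?cfix // => /eqP; by rewrite (negbTE ab).
Qed.
Lemma link1 : connected (cls T1) (cls C3).
Proof. apply: rt_trans (rt_step _ _ _ _ adj_tx) (rt_step _ _ _ _ (adj_sym adj_cx)). Qed.
Lemma link2 : connected (cls C3) (cls T1).
Proof. apply: rt_trans (rt_step _ _ _ _ adj_cx) (rt_step _ _ _ _ (adj_sym adj_tx)). Qed.
End Link.
Lemma pick_in (Y : {set 'I_n}) : (0 < #|Y|)%N -> exists y, y \in Y.
Proof. by rewrite card_gt0 => /set0Pn. Qed.

Lemma three_out (a b c : 'I_n) : (6 <= n)%N -> exists d e f : 'I_n,
  [/\ [&& d != a, d != b & d != c], [&& e != a, e != b & e != c],
      [&& f != a, f != b & f != c] & [&& d != e, d != f & e != f]].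
Proof.
move=> n6; set X := [set a; b; c].
have hX : (#|X| <= 3)%N.
  by rewrite /X setUC cardsU1 cards2; case: (_ \notin _); case: (_ != _).
have hY : (3 <= #|~: X|)%N.
  by have := cardsC X; rewrite card_ord => h; lia.
have [d hd] : exists d, d \in ~: X by apply: pick_in; apply: (leq_trans _ hY).
have hY1 : (2 <= #|~: X :\ d|)%N.
  by rewrite (cardsD1 d) hd add1n ltnS in hY.
have [e he] : exists e, e \in ~: X :\ d by apply: pick_in; apply: (leq_trans _ hY1).
have hY2 : (1 <= #|~: X :\ d :\ e|)%N.
  by rewrite (cardsD1 e) he add1n ltnS in hY1.
have [f hf] := pick_in hY2.
move: hd he hf; rewrite !inE !negb_or -!andbA.
move=> hd /and4P[ed ea eb ec] /and5P[fe fd fa fb fc].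
exists d, e, f; split=> //; rewrite ?ea ?eb ?ec ?fa ?fb ?fc //.
by rewrite eq_sym ed eq_sym fd eq_sym fe.
Qed.

Hypothesis n6 : (6 <= n)%N.

Lemma step (a b c : 'I_n) : a != b -> a != c ->
  connected (cls (tperm a b)) (cls (tperm a c)).
Proof.
move=> ab ac; case: (b =P c) => [<-|/eqP bc]; first exact: rt_refl.
have [d [e [f [/and3P[da db dc] /and3P[ea eb ec] /and3P[fa fb fc] /and3P[de df ef]]]]] := three_out a b c n6.
apply: (rt_trans _ _ _ (cls (tperm d e * tperm e f))).
  by apply: link1; first [done | rewrite eq_sym].
by apply: (link2 (a:=a) (b:=c) (d:=d) (e:=e) (f:=f)); first [done | rewrite eq_sym].
Qed.

Lemma trans_conn (a b c d : 'I_n) : a != b -> c != d ->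
  connected (cls (tperm a b)) (cls (tperm c d)).
Proof.
move=> ab cd; case: (a =P c) => [ac|/eqP ac]; first by subst; apply: step.
apply: (rt_trans _ _ _ (cls (tperm a c))); first by apply: step.
by rewrite tpermC; apply: step; first [done | rewrite eq_sym].
Qed.

End S.

Lemma count_enum_card (T : finType) (A : {set T}) (p : pred T) :
  count p (enum A) = #|[set x in A | p x]|.
Proof.
rewrite cardE /enum_mem size_filter count_filter; apply: eq_count => x.
by rewrite /= !inE andbC.
Qed.

Section C.
Local Open Scope group_scope.
Variable n : nat.

Lemma count_ct (s : 'S_n) k : count_mem k (cycle_type s) = #|[set X in porbits s | #|X| == k]|.
Proof. by rewrite /cycle_type count_map count_enum_card. Qed.

Lemma orbit_card (s : 'S_n) k :
  (#|[set X in porbits s | #|X| == k]| * k = #|[set z | #|porbit s z| == k]|)%N.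
Proof.
rewrite -[RHS]sum1_card (partition_big_imset (porbit s)).
have -> : porbit s @: [set z | #|porbit s z| == k] = [set X in porbits s | #|X| == k].
  apply/setP => X; rewrite [in RHS]inE. apply/imsetP/andP => [[z hz ->]|[/imsetP[z _ ->] hz]].
    by move: hz; rewrite inE => hz; split=> //; apply: imset_f.
  by exists z; rewrite // inE.
rewrite -sum_nat_const; apply: eq_bigr => X; rewrite inE => /andP[/imsetP[y _ ->] hy].
rewrite sum1_card -(eqP hy); apply: eq_card => z.
rewrite [in RHS]unfold_in /= inE eq_porbit_mem.
case hz: (z \in porbit s y); rewrite ?andbF // andbT.
have /eqP-> : porbit s z == porbit s y by rewrite eq_porbit_mem hz.
by rewrite eqxx.
Qed.

Lemma count0 (s : 'S_n) : #|[set X in porbits s | #|X| == 0]| = 0%N.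
Proof.
apply/eqP; rewrite cards_eq0; apply/eqP/setP => X; rewrite !inE.
apply/negbTE; apply/andP => [[/imsetP[y _ ->]]]; apply/negP; exact: card_porbit_neq0.
Qed.
Lemma has_type_gen (s : 'S_n) (S2 S3 : {set 'I_n}) m2 m3 :
  (forall z, #|porbit s z| = if z \in S2 then 2 else if z \in S3 then 3 else 1)%N ->
  [disjoint S2 & S3] -> #|S2| = (2 * m2)%N -> #|S3| = (3 * m3)%N ->
  has_type s (nseq (n - #|S2| - #|S3|) 1%N ++ nseq m2 2%N ++ nseq m3 3%N).
Proof.
move=> hf dis h2 h3; rewrite /has_type /perm_eq; apply/allP => k _; apply/eqP.
rewrite count_ct !count_cat !count_nseq.
have hc := orbit_card s k.
case: k hc => [|[|[|[|k]]]] hc /=.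
- by rewrite count0.
- have E : [set z | #|porbit s z| == 1%N] = ~: (S2 :|: S3).
    by apply/setP => z; rewrite !inE hf; case: (z \in S2); case: (z \in S3).
  rewrite E [#|~: _|]cardsCs setCK card_ord cardsU (disjoint_setI0 dis) cards0 subn0 subnDA muln1 in hc.
  by rewrite hc mul1n !mul0n !addn0.
- have E : [set z | #|porbit s z| == 2%N] = S2.
    by apply/setP => z; rewrite !inE hf; case: (z \in S2); case: (z \in S3).
  rewrite !mul0n mul1n add0n addn0; apply/eqP.
  by rewrite -(eqn_pmul2r (_ : 0 < 2)%N) // hc E h2 mulnC.
- have E : [set z | #|porbit s z| == 3%N] = S3.
    apply/setP => z; rewrite !inE hf; case h: (z \in S2); last by case: (z \in S3).
    by rewrite (disjointFr dis h).
  rewrite !mul0n mul1n !add0n; apply/eqP.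
  by rewrite -(eqn_pmul2r (_ : 0 < 3)%N) // hc E h3 mulnC.
- have E : [set z | #|porbit s z| == k.+4] = set0.
    by apply/setP => z; rewrite !inE hf; case: (z \in S2); case: (z \in S3).
  rewrite E cards0 in hc; apply/eqP; move/eqP: hc; rewrite muln_eq0 orbF !mul0n.
  done.
Qed.

End C.

Section O.
Local Open Scope group_scope.
Variable n : nat.

Lemma porbit_closed (s : 'S_n) z (A : {set 'I_n}) : z \in A ->
  (forall y, y \in A -> s y \in A) -> porbit s z \subset A.
Proof.
move=> zA hA; apply/subsetP => y /porbitP[i ->].
elim: i => [|i IH]; first by rewrite expg0 perm1.
by rewrite expgSr permM; apply: hA.
Qed.

Lemma porbit_next (s : 'S_n) z : s z \in porbit s z.
Proof. by have := mem_porbit s 1 z; rewrite expg1. Qed.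

Lemma porbit_step (s : 'S_n) z y : y \in porbit s z -> s y \in porbit s z.
Proof. by rewrite -eq_porbit_mem => /eqP <-; exact: porbit_next. Qed.

Lemma porbit_fix (s : 'S_n) z : s z = z -> #|porbit s z| = 1%N.
Proof.
move=> h; suff -> : porbit s z = [set z] by rewrite cards1.
apply/eqP; rewrite eqEsubset; apply/andP; split.
  by apply: porbit_closed; rewrite ?inE // => y /set1P->; rewrite h inE.
by rewrite sub1set porbit_id.
Qed.

Lemma porbit_same (s : 'S_n) z : porbit s (s z) = porbit s z.
Proof. by have := porbit_perm s 1 z; rewrite expg1. Qed.

Lemma orb2 (s : 'S_n) a b : a != b -> s a = b -> s b = a ->
  #|porbit s a| = 2%N /\ #|porbit s b| = 2%N.
Proof.
move=> ab sa sb.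
have E : porbit s a = [set a; b].
  apply/eqP; rewrite eqEsubset; apply/andP; split.
    apply: porbit_closed; first by rewrite !inE eqxx.
    by move=> y; rewrite !inE => /orP[]/eqP->; rewrite ?sa ?sb eqxx ?orbT.
  apply/subsetP => y; rewrite !inE => /orP[]/eqP->; first exact: porbit_id.
  by rewrite -sa; exact: porbit_next.
by rewrite -sa porbit_same E cards2 ab.
Qed.

Lemma orb3 (s : 'S_n) d e f : d != e -> d != f -> e != f ->
  s d = f -> s f = e -> s e = d ->
  [/\ #|porbit s d| = 3%N, #|porbit s e| = 3%N & #|porbit s f| = 3%N].
Proof.
move=> de df ef sd sf se.
have E : porbit s d = d |: (f |: [set e]).
  apply/eqP; rewrite eqEsubset; apply/andP; split.
    apply: porbit_closed; first by rewrite !inE eqxx.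
    by move=> y; rewrite !inE => /orP[/eqP->|/orP[]/eqP->]; rewrite ?sd ?sf ?se eqxx ?orbT.
  apply/subsetP => y; rewrite !inE => /orP[/eqP->|/orP[]/eqP->]; first exact: porbit_id.
    by rewrite -sd; exact: porbit_next.
  by rewrite -sf; apply: porbit_step; rewrite -sd; exact: porbit_next.
have C : #|porbit s d| = 3%N.
  by rewrite E !cardsU1 cards1 !inE (negbTE df) (negbTE de) (eq_sym f e) (negbTE ef).
split=> //.
- by rewrite -sf -sd !porbit_same.
- by rewrite -sd porbit_same.
Qed.
End O.

Section Inst.
Local Open Scope group_scope.
Variable n : nat.

Lemma tpermE' (x y z : 'I_n) : tperm x y z = if z == x then y else if z == y then x else z.
Proof.
case: tpermP => [->|->|/eqP/negbTE-> /eqP/negbTE->]; rewrite ?eqxx //.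
by case: eqP => // ->.
Qed.
Lemma neqSF' (T : eqType) (x y : T) : x != y -> (y == x) = false.
Proof. by rewrite eq_sym => /negbTE. Qed.

Ltac fin0 := first [ done
  | match goal with H : is_true (?x != ?x) |- _ => by move: (H); rewrite eqxx end
  | match goal with H : ~ ?x = ?x |- _ => by case: H end ].
Ltac fin := first [ fin0 | (let h := fresh in intro h; subst; fin0) ].
Ltac simpk := repeat match goal with
  | H : is_true (?x != ?y) |- context [?x == ?y] => rewrite (negbTE H)
  | H : is_true (?x != ?y) |- context [?y == ?x] => rewrite (neqSF' H)
  | H : ~ ?x = ?y |- context [?x == ?y] => rewrite (introF eqP H)
  | H : ~ ?y = ?x |- context [?x == ?y] => rewrite eq_sym (introF eqP H) end; rewrite ?eqxx /=.
Ltac casev := repeat (simpk; match goal with |- context [?x == ?y] => is_var x; is_var y; case: (x =P y) => ?; subst end); simpk.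
Ltac evalp := rewrite ?permM ?perm1 ?tpermE'; casev; try fin.

Variables a b d e f : 'I_n.
Hypotheses (ab : a != b) (ad : a != d) (ae : a != e) (af : a != f)
  (bd : b != d) (be : b != e) (bf : b != f) (de : d != e) (df : d != f) (ef : e != f).
Local Notation T1 := (tperm a b).
Local Notation C3 := (tperm d e * tperm e f).
Local Notation X6 := (T1 * C3).

Lemma typeA : has_type T1 (nseq (n - 2) 1%N ++ [:: 2%N]).
Proof.
have := @has_type_gen n T1 [set a; b] set0 1 0.
rewrite cards2 ab cards0 subn0 /=; apply => //; last by rewrite -setI_eq0 setI0.
move=> z; have [ha hb] := orb2 ab (tpermL a b) (tpermR a b).
case: (z =P a) => [->|za]; first by rewrite !inE eqxx.
case: (z =P b) => [->|zb]; first by rewrite !inE eqxx orbT.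
rewrite !inE; simpk; apply: porbit_fix; evalp.
Qed.
Lemma X6vals : [/\ X6 a = b, X6 b = a, X6 d = f, X6 f = e & X6 e = d].
Proof. by split; evalp. Qed.
Lemma C3vals : [/\ C3 d = f, C3 f = e & C3 e = d].
Proof. by split; evalp. Qed.

Lemma typeB : has_type X6 (nseq (n - 5) 1%N ++ [:: 2%N; 3%N]).
Proof.
have := @has_type_gen n X6 [set a; b] (d |: (f |: [set e])) 1 1.
have c3 : #|d |: (f |: [set e])| = 3%N.
  by rewrite !cardsU1 cards1 !inE (negbTE df) (negbTE de) (eq_sym f e) (negbTE ef).
rewrite cards2 ab c3 -subnDA /=; apply => //.
- have [ha hb hd hf he] := X6vals.
  have [ra rb] := orb2 ab ha hb.
  have [rd re rf] := orb3 de df ef hd hf he.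
  move=> z.
  case: (z =P a) => [->|za]; first by rewrite !inE eqxx.
  case: (z =P b) => [->|zb]; first by rewrite !inE eqxx orbT.
  case: (z =P d) => [->|zd]; first by rewrite !inE eqxx; simpk.
  case: (z =P e) => [->|ze]; first by rewrite !inE eqxx; simpk.
  case: (z =P f) => [->|zf]; first by rewrite !inE eqxx; simpk.
  rewrite !inE; simpk; apply: porbit_fix; evalp.
- rewrite -setI_eq0; apply/eqP/setP => z; rewrite !inE; casev; try fin.
Qed.

Lemma typeC : has_type C3 (nseq (n - 3) 1%N ++ [:: 3%N]).
Proof.
have := @has_type_gen n C3 set0 (d |: (f |: [set e])) 0 1.
have c3 : #|d |: (f |: [set e])| = 3%N.
  by rewrite !cardsU1 cards1 !inE (negbTE df) (negbTE de) (eq_sym f e) (negbTE ef).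
rewrite cards0 c3 subn0 /=; apply => //.
- have [hd hf he] := C3vals.
  have [rd re rf] := orb3 de df ef hd hf he.
  move=> z.
  case: (z =P d) => [->|zd]; first by rewrite !inE eqxx; simpk.
  case: (z =P e) => [->|ze]; first by rewrite !inE eqxx; simpk.
  case: (z =P f) => [->|zf]; first by rewrite !inE eqxx; simpk.
  rewrite !inE; simpk; apply: porbit_fix; evalp.
- by rewrite -setI_eq0 set0I.
Qed.
End Inst.

Theorem lemma7p4 (n : nat) (hn : (6 <= n)%N) :
  (forall t1 t2 : 'S_n, transposition t1 -> transposition t2 ->
     connected (cls t1) (cls t2)) /\
  (exists psi : 'S_n, has_type psi (nseq (n - 2) 1%N ++ [:: 2%N]) /\
     forall t : 'S_n, transposition t -> connected (cls t) (cls psi)) /\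
  (exists psi : 'S_n, has_type psi (nseq (n - 5) 1%N ++ [:: 2%N; 3%N]) /\
     forall t : 'S_n, transposition t -> connected (cls t) (cls psi)) /\
  (exists psi : 'S_n, has_type psi (nseq (n - 3) 1%N ++ [:: 3%N]) /\
     forall t : 'S_n, transposition t -> connected (cls t) (cls psi)).
Proof.
have x0 : 'I_n := Ordinal (leq_ltn_trans (leq0n 5) hn).
have [a [b [c [_ _ _ /and3P[ab _ _]]]]] := three_out x0 x0 x0 hn.
have [d [e [f [/and3P[da db _] /and3P[ea eb _] /and3P[fa fb _] /and3P[de df ef]]]]] := three_out a b a hn.
have ad : a != d by rewrite eq_sym.
have ae : a != e by rewrite eq_sym.
have af : a != f by rewrite eq_sym.
have bd : b != d by rewrite eq_sym.
have be : b != e by rewrite eq_sym.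
have bf : b != f by rewrite eq_sym.
split.
  by move=> t1 t2 [i [j [ij ->]]] [k [l [kl ->]]]; exact: trans_conn.
split.
  exists (tperm a b); split; first exact: typeA.
  by move=> t [i [j [ij ->]]]; exact: trans_conn.
split.
  exists (tperm a b * (tperm d e * tperm e f))%g; split; first by apply: typeB.
  move=> t [i [j [ij ->]]]; apply: (rt_trans _ _ _ (cls (tperm a b))); first by apply: trans_conn.
  by apply: rt_step; apply: adj_tx.
exists (tperm d e * tperm e f)%g; split; first by apply: (@typeC n a b).
move=> t [i [j [ij ->]]]; apply: (rt_trans _ _ _ (cls (tperm a b))); first by apply: trans_conn.
by apply: link1.
Qed.
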